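(* For every countable subset $\Sigma \subseteq \mathbb{C}$ and every dense subset $T \subseteq \mathbb{C}$ there is a transcendental entire function $f$ such that $f^{(s)}(\Sigma) \subseteq T$ for all integers $s \geq 0$.
   Context: A transcendental entire function is an entire function $\mathbb{C}\to\mathbb{C}$ that is not a polynomial. $f^{(s)}$ denotes the $s$-th derivative of $f$, with $f^{(0)}=f$. *)

(* Defs.v *)
From Stdlib Require Import Reals.
Open Scope R_scope.

Record Cplx : Type := mkC { Re : R ; Im : R }.

Definition C0 : Cplx := mkC 0 0.
Definition C1 : Cplx := mkC 1 0.
Definition Cadd (z w : Cplx) : Cplx := mkC (Re z + Re w) (Im z + Im w).
Definition Copp (z : Cplx) : Cplx := mkC (- Re z) (- Im z).
Definition Csub (z w : Cplx) : Cplx := Cadd z (Copp w).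
Definition Cmul (z w : Cplx) : Cplx :=
  mkC (Re z * Re w - Im z * Im w) (Re z * Im w + Im z * Re w).
Definition Cnorm (z : Cplx) : R := sqrt (Re z * Re z + Im z * Im z).

Fixpoint Cpow (z : Cplx) (n : nat) : Cplx :=
  match n with O => C1 | S m => Cmul z (Cpow z m) end.

Fixpoint Csum (a : nat -> Cplx) (n : nat) : Cplx :=
  match n with O => a O | S m => Cadd (Csum a m) (a (S m)) end.

Definition C_has_derivative (f : Cplx -> Cplx) (z l : Cplx) : Prop :=
  forall eps : R, 0 < eps -> exists delta : R, 0 < delta /\
    forall h : Cplx, Cnorm h < delta ->
      Cnorm (Csub (Csub (f (Cadd z h)) (f z)) (Cmul l h)) <= eps * Cnorm h.

Definition entire (f : Cplx -> Cplx) : Prop :=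
  forall z, exists l, C_has_derivative f z l.

Definition is_polynomial (f : Cplx -> Cplx) : Prop :=
  exists (n : nat) (a : nat -> Cplx), forall z, f z = Csum (fun k => Cmul (a k) (Cpow z k)) n.

Definition transcendental_entire (f : Cplx -> Cplx) : Prop :=
  entire f /\ ~ is_polynomial f.

(* D s is the s-th complex derivative of f (D 0 = f). For entire f such a tower
   exists and is unique. *)
Definition derivative_tower (f : Cplx -> Cplx) (D : nat -> Cplx -> Cplx) : Prop :=
  D O = f /\ forall (s : nat) (z : Cplx), C_has_derivative (D s) z (D (S s) z).

Definition countable_set (S : Cplx -> Prop) : Prop :=
  exists e : nat -> Cplx, forall z, S z -> exists n, e n = z.

Definition dense_set (T : Cplx -> Prop) : Prop :=
  forall (z : Cplx) (eps : R), 0 < eps -> exists t, T t /\ Cnorm (Csub t z) < eps.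

(* Main.v *)
Require Import Defs.
From Stdlib Require Import Reals Lra Lia Psatz List Arith Factorial Classical ClassicalEpsilon.
Import ListNotations.
Import Defs.
Open Scope R_scope.

Lemma Cext : forall z w, Re z = Re w -> Im z = Im w -> z = w.
Proof. intros [a b] [c d]; simpl; intros; subst; reflexivity. Qed.

Ltac Csolve := intros; apply Cext; unfold Csub, Cadd, Copp, Cmul, C0, C1; simpl; ring.

Lemma Cnorm_nonneg : forall z, 0 <= Cnorm z.
Proof. intros; unfold Cnorm; apply sqrt_pos. Qed.

Lemma Cnorm_mul : forall z w, Cnorm (Cmul z w) = Cnorm z * Cnorm w.
Proof.
  intros [a b] [c d]; unfold Cnorm, Cmul; simpl.
  rewrite <- sqrt_mult_alt by nra. f_equal. ring.
Qed.

Lemma Cnorm_sq : forall z, Cnorm z * Cnorm z = Re z * Re z + Im z * Im z.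
Proof. intros; unfold Cnorm; apply sqrt_sqrt; nra. Qed.

Lemma Cnorm_triangle : forall z w, Cnorm (Cadd z w) <= Cnorm z + Cnorm w.
Proof.
  intros z w.
  pose proof (Cnorm_sq z) as H. pose proof (Cnorm_sq w) as H0. pose proof (Cnorm_sq (Cadd z w)) as H1.
  pose proof (Cnorm_nonneg z). pose proof (Cnorm_nonneg w). pose proof (Cnorm_nonneg (Cadd z w)).
  remember (Cnorm (Cadd z w)) as x. remember (Cnorm z) as u. remember (Cnorm w) as v.
  destruct z as [a b]; destruct w as [c d]; unfold Cadd in *; simpl in *.
  assert (a*c + b*d <= u * v).
  { assert ((a*c+b*d)*(a*c+b*d) <= (u*v)*(u*v)).
    { replace ((u*v)*(u*v)) with ((u*u)*(v*v)) by ring. rewrite H, H0. pose proof (Rle_0_sqr (a*d-b*c)); unfold Rsqr in *; nra. }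
    apply Rsqr_incr_0_var; unfold Rsqr; nra. }
  nra.
Qed.

Lemma Cnorm_Re : forall z, Rabs (Re z) <= Cnorm z.
Proof.
  intros z. pose proof (Cnorm_sq z). pose proof (Cnorm_nonneg z).
  apply Rsqr_incr_0_var; [| auto]. rewrite <- Rsqr_abs. unfold Rsqr. nra.
Qed.
Lemma Cnorm_Im : forall z, Rabs (Im z) <= Cnorm z.
Proof.
  intros z. pose proof (Cnorm_sq z). pose proof (Cnorm_nonneg z).
  apply Rsqr_incr_0_var; [| auto]. rewrite <- Rsqr_abs. unfold Rsqr. nra.
Qed.
Lemma Cnorm_le_sum : forall z, Cnorm z <= Rabs (Re z) + Rabs (Im z).
Proof.
  intros z. pose proof (Cnorm_sq z). pose proof (Cnorm_nonneg z).
  pose proof (Rabs_pos (Re z)); pose proof (Rabs_pos (Im z)).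
  apply Rsqr_incr_0_var; [| lra]. unfold Rsqr.
  rewrite H. pose proof (Rsqr_abs (Re z)); pose proof (Rsqr_abs (Im z)). unfold Rsqr in *. nra.
Qed.

Lemma Cnorm_real : forall x, Cnorm (mkC x 0) = Rabs x.
Proof. intros; unfold Cnorm; simpl. replace (x*x+0*0) with (x*x) by ring. apply sqrt_Rsqr_abs. Qed.

Lemma Cnorm_C0 : Cnorm C0 = 0.
Proof. unfold C0; rewrite Cnorm_real; apply Rabs_R0. Qed.

Lemma Cnorm_eq0 : forall z, Cnorm z = 0 -> z = C0.
Proof.
  intros z H. pose proof (Cnorm_sq z). rewrite H in H0.
  apply Cext; unfold C0; simpl; nra.
Qed.

Lemma Cnorm_pos : forall z, z <> C0 -> 0 < Cnorm z.
Proof. intros z H. destruct (Cnorm_nonneg z); auto. exfalso; apply H, Cnorm_eq0; auto. Qed.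

Lemma Cnorm_opp : forall z, Cnorm (Copp z) = Cnorm z.
Proof. intros [a b]; unfold Cnorm, Copp; simpl; f_equal; ring. Qed.

Lemma Cnorm_sub_sym : forall z w, Cnorm (Csub z w) = Cnorm (Csub w z).
Proof. intros. replace (Csub z w) with (Copp (Csub w z)) by Csolve. apply Cnorm_opp. Qed.

Lemma Cnorm_sub_le : forall z w, Cnorm (Csub z w) <= Cnorm z + Cnorm w.
Proof. intros; unfold Csub; rewrite <- (Cnorm_opp w); apply Cnorm_triangle. Qed.

Lemma Cmul_nonzero : forall z w, z <> C0 -> w <> C0 -> Cmul z w <> C0.
Proof.
  intros z w Hz Hw H. pose proof (Cnorm_pos _ Hz); pose proof (Cnorm_pos _ Hw).
  assert (Cnorm (Cmul z w) = 0) by (rewrite H; apply Cnorm_C0).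
  rewrite Cnorm_mul in H2. nra.
Qed.

Lemma Csub_nonzero : forall z w, z <> w -> Csub z w <> C0.
Proof.
  intros z w H H1. apply H. replace z with (Cadd (Csub z w) w) by Csolve. rewrite H1. Csolve.
Qed.

Definition Cinv (q : Cplx) : Cplx :=
  mkC (Re q / (Re q * Re q + Im q * Im q)) (- Im q / (Re q * Re q + Im q * Im q)).

Lemma Cinv_l : forall q, q <> C0 -> Cmul (Cinv q) q = C1.
Proof.
  intros q H. pose proof (Cnorm_pos _ H). pose proof (Cnorm_sq q).
  assert (Re q * Re q + Im q * Im q <> 0) by nra.
  destruct q as [a b]; simpl in *; apply Cext; unfold Cmul, Cinv, C1; simpl; field; auto.
Qed.

Definition INRc (n : nat) : Cplx := mkC (INR n) 0.

Lemma INRc_nonzero : forall n, (n > 0)%nat -> INRc n <> C0.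
Proof.
  intros n Hn H. assert (Re (INRc n) = Re C0) by (rewrite H; auto).
  unfold INRc, C0 in H0; simpl in H0. apply lt_0_INR in Hn. lra.
Qed.
Fixpoint eval (l : list Cplx) (z : Cplx) : Cplx :=
  match l with [] => C0 | a :: l' => Cadd a (Cmul z (eval l' z)) end.
Fixpoint ladd (a b : list Cplx) : list Cplx :=
  match a, b with
  | [], _ => b
  | _, [] => a
  | x :: a', y :: b' => Cadd x y :: ladd a' b'
  end.
Definition scale (c : Cplx) (l : list Cplx) := map (Cmul c) l.
Fixpoint deriv (l : list Cplx) : list Cplx :=
  match l with [] => [] | a :: l' => ladd l' (C0 :: deriv l') end.
Definition lin (p : Cplx) (l : list Cplx) := ladd (C0 :: l) (scale (Copp p) l).
Fixpoint linpow (p : Cplx) (m : nat) (l : list Cplx) :=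
  match m with O => l | S m => lin p (linpow p m l) end.
Fixpoint dern (s : nat) (l : list Cplx) :=
  match s with O => l | S s => deriv (dern s l) end.
Fixpoint absp (l : list Cplx) (x : R) : R :=
  match l with [] => 0 | a :: l' => Cnorm a + x * absp l' x end.

Lemma eval_ladd : forall a b z, eval (ladd a b) z = Cadd (eval a z) (eval b z).
Proof.
  induction a as [|x a IH]; intros [|y b] z; simpl; try Csolve.
  rewrite IH. Csolve.
Qed.

Lemma eval_scale : forall c a z, eval (scale c a) z = Cmul c (eval a z).
Proof. induction a as [|x a IH]; intros z; simpl; [Csolve|]. rewrite IH. Csolve. Qed.

Lemma eval_lin : forall p l z, eval (lin p l) z = Cmul (Csub z p) (eval l z).
Proof. intros; unfold lin; rewrite eval_ladd, eval_scale; simpl. Csolve. Qed.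

Lemma eval_deriv_cons : forall a l z,
  eval (deriv (a :: l)) z = Cadd (eval l z) (Cmul z (eval (deriv l) z)).
Proof. intros; simpl deriv; rewrite eval_ladd; simpl. Csolve. Qed.

Lemma deriv_ladd : forall a b z,
  eval (deriv (ladd a b)) z = Cadd (eval (deriv a) z) (eval (deriv b) z).
Proof.
  induction a as [|x a IH]; intros [|y b] z; simpl ladd; try (simpl; Csolve).
  rewrite !eval_deriv_cons, IH, eval_ladd. Csolve.
Qed.

Lemma deriv_scale : forall c a z, eval (deriv (scale c a)) z = Cmul c (eval (deriv a) z).
Proof.
  induction a as [|x a IH]; intros z; [simpl; Csolve|].
  change (scale c (x :: a)) with (Cmul c x :: scale c a).
  rewrite !eval_deriv_cons, IH, eval_scale. Csolve.
Qed.

Lemma deriv_lin : forall p l z,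
  eval (deriv (lin p l)) z = Cadd (eval l z) (Cmul (Csub z p) (eval (deriv l) z)).
Proof.
  intros; unfold lin. rewrite deriv_ladd, eval_deriv_cons, deriv_scale. simpl. Csolve.
Qed.

Lemma absp_nonneg : forall l x, 0 <= x -> 0 <= absp l x.
Proof. induction l; intros; simpl; [lra|]. pose proof (Cnorm_nonneg a). pose proof (IHl x H). nra. Qed.

Lemma absp_mono : forall l x y, 0 <= x -> x <= y -> absp l x <= absp l y.
Proof.
  induction l; intros; simpl; [lra|]. pose proof (IHl x y H H0). pose proof (absp_nonneg l x H). nra.
Qed.

Lemma eval_bound : forall l w, Cnorm (eval l w) <= absp l (Cnorm w).
Proof.
  induction l; intros; simpl. rewrite Cnorm_C0; lra.
  eapply Rle_trans; [apply Cnorm_triangle|]. rewrite Cnorm_mul.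
  pose proof (IHl w). pose proof (Cnorm_nonneg w). nra.
Qed.

Definition Erem (l : list Cplx) (z h : Cplx) :=
  Csub (Csub (eval l (Cadd z h)) (eval l z)) (Cmul (eval (deriv l) z) h).

Lemma B1 : forall l z h, Cnorm h <= 1 ->
  Cnorm (Csub (eval l (Cadd z h)) (eval l z)) <= Cnorm h * absp l (Cnorm z + 1).
Proof.
  induction l as [|a l IH]; intros z h Hh.
  - simpl. replace (Csub C0 C0) with C0 by Csolve. rewrite Cnorm_C0; lra.
  - simpl eval. simpl absp.
    replace (Csub (Cadd a (Cmul (Cadd z h) (eval l (Cadd z h)))) (Cadd a (Cmul z (eval l z))))
      with (Cadd (Cmul z (Csub (eval l (Cadd z h)) (eval l z))) (Cmul h (eval l (Cadd z h)))) by Csolve.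
    eapply Rle_trans; [apply Cnorm_triangle|]. rewrite !Cnorm_mul.
    pose proof (IH z h Hh). pose proof (eval_bound l (Cadd z h)).
    pose proof (Cnorm_triangle z h). pose proof (Cnorm_nonneg z). pose proof (Cnorm_nonneg h).
    pose proof (absp_mono l (Cnorm (Cadd z h)) (Cnorm z + 1) (Cnorm_nonneg _) ltac:(lra)).
    pose proof (absp_nonneg l (Cnorm z + 1) ltac:(lra)). pose proof (Cnorm_nonneg a).
    nra.
Qed.

Lemma B2 : forall l z h, Cnorm h <= 1 ->
  Cnorm (Erem l z h) <= Cnorm h * Cnorm h * absp l (Cnorm z + 1).
Proof.
  induction l as [|a l IH]; intros z h Hh; unfold Erem in *.
  - simpl. replace (Csub (Csub C0 C0) (Cmul C0 h)) with C0 by Csolve. rewrite Cnorm_C0.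
    pose proof (Cnorm_nonneg h). nra.
  - rewrite eval_deriv_cons. simpl eval. simpl absp.
    replace (Csub (Csub (Cadd a (Cmul (Cadd z h) (eval l (Cadd z h)))) (Cadd a (Cmul z (eval l z))))
       (Cmul (Cadd (eval l z) (Cmul z (eval (deriv l) z))) h))
      with (Cadd (Cmul z (Csub (Csub (eval l (Cadd z h)) (eval l z)) (Cmul (eval (deriv l) z) h)))
                 (Cmul h (Csub (eval l (Cadd z h)) (eval l z)))) by Csolve.
    eapply Rle_trans; [apply Cnorm_triangle|]. rewrite !Cnorm_mul.
    pose proof (IH z h Hh). pose proof (B1 l z h Hh).
    pose proof (Cnorm_nonneg z). pose proof (Cnorm_nonneg h).
    pose proof (absp_nonneg l (Cnorm z + 1) ltac:(lra)). pose proof (Cnorm_nonneg a).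
    nra.
Qed.

Lemma eval_has_deriv : forall l z, C_has_derivative (eval l) z (eval (deriv l) z).
Proof.
  intros l z eps He. set (A := absp l (Cnorm z + 1)).
  assert (HA : 0 <= A) by (apply absp_nonneg; pose proof (Cnorm_nonneg z); lra).
  exists (Rmin 1 (eps / (A + 1))). split.
  { apply Rmin_pos; [lra|]. apply Rdiv_lt_0_compat; lra. }
  intros h Hh. pose proof (Rmin_l 1 (eps/(A+1))). pose proof (Rmin_r 1 (eps/(A+1))).
  pose proof (B2 l z h ltac:(lra)). unfold Erem in H1. fold A in H1.
  pose proof (Cnorm_nonneg h).
  assert (Cnorm h * A <= eps).
  { assert (Cnorm h * (A+1) <= eps).
    { assert (Cnorm h <= eps / (A+1)) by lra.
      apply (Rmult_le_compat_r (A+1)) in H3; [|lra].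
      unfold Rdiv in H3. rewrite Rmult_assoc, Rinv_l in H3; lra. }
    nra. }
  nra.
Qed.

Lemma deriv_unique : forall f z l1 l2,
  C_has_derivative f z l1 -> C_has_derivative f z l2 -> l1 = l2.
Proof.
  intros f z l1 l2 H1 H2.
  apply NNPP; intro Hne.
  assert (Hpos : 0 < Cnorm (Csub l1 l2)) by (apply Cnorm_pos, Csub_nonzero; auto).
  set (eps := Cnorm (Csub l1 l2) / 4).
  destruct (H1 eps ltac:(unfold eps; lra)) as [d1 [Hd1 P1]].
  destruct (H2 eps ltac:(unfold eps; lra)) as [d2 [Hd2 P2]].
  set (t := Rmin d1 d2 / 2).
  assert (Ht : 0 < t) by (unfold t; pose proof (Rmin_pos d1 d2 Hd1 Hd2); lra).
  set (h := mkC t 0).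
  assert (Hh : Cnorm h = t) by (unfold h; rewrite Cnorm_real; apply Rabs_right; lra).
  assert (t < d1) by (unfold t; pose proof (Rmin_l d1 d2); lra).
  assert (t < d2) by (unfold t; pose proof (Rmin_r d1 d2); lra).
  specialize (P1 h ltac:(lra)). specialize (P2 h ltac:(lra)).
  set (X := Csub (f (Cadd z h)) (f z)) in *.
  pose proof (Cnorm_sub_le (Csub X (Cmul l2 h)) (Csub X (Cmul l1 h))) as H3.
  assert (H4 : Cnorm (Cmul (Csub l1 l2) h) = Cnorm (Csub l1 l2) * t) by (rewrite Cnorm_mul, Hh; auto).
  replace (Cmul (Csub l1 l2) h) with (Csub (Csub X (Cmul l2 h)) (Csub X (Cmul l1 h))) in H4 by Csolve.
  rewrite Hh in P1, P2. unfold eps in *. nra.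
Qed.

Lemma has_deriv_ext : forall f g z l, (forall w, f w = g w) ->
  C_has_derivative f z l -> C_has_derivative g z l.
Proof.
  intros f g z l Hfg H eps He. destruct (H eps He) as [d [Hd P]]. exists d; split; auto.
  intros h Hh. rewrite <- !Hfg. auto.
Qed.

Lemma deriv_eqv : forall a b, (forall z, eval a z = eval b z) ->
  forall z, eval (deriv a) z = eval (deriv b) z.
Proof.
  intros a b H z. apply (deriv_unique (eval b) z).
  - apply (has_deriv_ext (eval a)); auto. apply eval_has_deriv.
  - apply eval_has_deriv.
Qed.

Lemma dern_eqv : forall s a b, (forall z, eval a z = eval b z) ->
  forall z, eval (dern s a) z = eval (dern s b) z.
Proof. induction s; simpl; auto. intros; apply deriv_eqv; intros; apply IHs; auto. Qed.

Lemma leibniz : forall s p l z,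
  eval (dern (S s) (lin p l)) z =
  Cadd (Cmul (Csub z p) (eval (dern (S s) l) z)) (Cmul (INRc (S s)) (eval (dern s l) z)).
Proof.
  induction s; intros.
  - simpl. rewrite deriv_lin. unfold INRc; simpl. Csolve.
  - change (dern (S (S s)) (lin p l)) with (deriv (dern (S s) (lin p l))).
    rewrite (deriv_eqv _ (ladd (lin p (dern (S s) l)) (scale (INRc (S s)) (dern s l)))).
    2: { intros w; rewrite IHs, eval_ladd, eval_lin, eval_scale; reflexivity. }
    rewrite deriv_ladd, deriv_lin, deriv_scale. simpl dern. unfold INRc. rewrite (S_INR (S s)). Csolve.
Qed.

Definition vanish (l : list Cplx) (p : Cplx) (m : nat) :=
  forall i, (i < m)%nat -> eval (dern i l) p = C0.

Lemma vanish_lin : forall l p m q, vanish l p m -> vanish (lin q l) p m.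
Proof.
  intros l p m q H i Hi. destruct i.
  - simpl. rewrite eval_lin. assert (E := H 0%nat ltac:(lia)); simpl in E; rewrite E. Csolve.
  - rewrite leibniz. rewrite (H (S i)) by lia. rewrite (H i) by lia. Csolve.
Qed.

Lemma vanish_lin_same : forall l p m, vanish l p m -> vanish (lin p l) p (S m).
Proof.
  intros l p m H i Hi. destruct i.
  - simpl. rewrite eval_lin. Csolve.
  - rewrite leibniz. rewrite (H i) by lia. Csolve.
Qed.

Lemma vanish_linpow_same : forall p m l, vanish (linpow p m l) p m.
Proof.
  induction m; intros l. intros i Hi; lia.
  simpl. apply vanish_lin_same; auto.
Qed.

Lemma vanish_linpow : forall l p m q k, vanish l p m -> vanish (linpow q k l) p m.
Proof. induction k; intros; simpl; auto. apply vanish_lin; auto. Qed.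

Lemma nonvan : forall m l p, eval (dern m (linpow p m l)) p = Cmul (INRc (fact m)) (eval l p).
Proof.
  induction m; intros.
  - unfold INRc; simpl. Csolve.
  - simpl linpow. rewrite leibniz, IHm. unfold INRc. change (fact (S m)) with (S m * fact m)%nat.
    rewrite mult_INR. Csolve.
Qed.

Lemma eval_linpow_nonzero : forall q m l z, z <> q -> eval l z <> C0 -> eval (linpow q m l) z <> C0.
Proof.
  induction m; intros; simpl; auto. rewrite eval_lin. apply Cmul_nonzero; auto. apply Csub_nonzero; auto.
Qed.

Fixpoint csum (f : nat -> Cplx) (n : nat) : Cplx :=
  match n with O => C0 | S n => Cadd (csum f n) (f n) end.
Fixpoint rsum (f : nat -> R) (n : nat) : R :=
  match n with O => 0 | S n => rsum f n + f n end.

Lemma csum_ext : forall f g n, (forall j, (j < n)%nat -> f j = g j) -> csum f n = csum g n.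
Proof. induction n; intros; simpl; auto. rewrite IHn by (intros; apply H; lia). rewrite H by lia; auto. Qed.

Lemma rsum_le : forall f g n, (forall j, (j < n)%nat -> f j <= g j) -> rsum f n <= rsum g n.
Proof. induction n; intros; simpl; [lra|]. pose proof (H n ltac:(lia)). pose proof (IHn ltac:(intros; apply H; lia)). lra. Qed.

Lemma csum_norm : forall f n, Cnorm (csum f n) <= rsum (fun j => Cnorm (f j)) n.
Proof.
  induction n; simpl. rewrite Cnorm_C0; lra.
  eapply Rle_trans; [apply Cnorm_triangle|]. lra.
Qed.

Lemma rsum_nonneg : forall f n, (forall j, 0 <= f j) -> 0 <= rsum f n.
Proof. induction n; intros; simpl; [lra|]. pose proof (H n). pose proof (IHn H). lra. Qed.

Lemma rsum_shift : forall f m d, rsum f (m + d) = rsum f m + rsum (fun j => f (m + j)%nat) d.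
Proof. induction d; simpl. rewrite Nat.add_0_r; lra. rewrite Nat.add_succ_r; simpl. rewrite IHd; lra. Qed.

Lemma rsum_mono : forall f m n, (forall j, 0 <= f j) -> (m <= n)%nat -> rsum f m <= rsum f n.
Proof.
  intros. replace n with (m + (n - m))%nat by lia. rewrite rsum_shift.
  pose proof (rsum_nonneg (fun j => f (m + j)%nat) (n - m) ltac:(intros; apply H)). lra.
Qed.

Lemma geom : forall m d, rsum (fun j => (/2)^(m+j)) d = 2 * (/2)^m - 2 * (/2)^(m+d).
Proof.
  induction d; simpl. rewrite Nat.add_0_r; ring.
  rewrite IHd. rewrite Nat.add_succ_r. simpl. field.
Qed.

Lemma geom_le : forall m d, rsum (fun j => (/2)^(m+j)) d <= 2 * (/2)^m.
Proof. intros; rewrite geom. pose proof (pow_le (/2) (m+d) ltac:(lra)). lra. Qed.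

Lemma Re_csum : forall f n, Re (csum f n) = rsum (fun j => Re (f j)) n.
Proof. induction n; simpl; auto. rewrite IHn; auto. Qed.
Lemma Im_csum : forall f n, Im (csum f n) = rsum (fun j => Im (f j)) n.
Proof. induction n; simpl; auto. rewrite IHn; auto. Qed.

Lemma csum_tail_zero : forall f m n, (forall j, (m <= j)%nat -> f j = C0) -> (m <= n)%nat ->
  csum f n = csum f m.
Proof.
  intros f m n H Hmn. induction Hmn; auto. simpl. rewrite IHHmn, H by lia. Csolve.
Qed.

Lemma rsum_abs : forall f n, Rabs (rsum f n) <= rsum (fun j => Rabs (f j)) n.
Proof. induction n; simpl. rewrite Rabs_R0; lra. eapply Rle_trans; [apply Rabs_triang|]. lra. Qed.

Lemma rsum_cv : forall (x : nat -> R) J, (forall j, (J <= j)%nat -> Rabs (x j) <= (/2)^j) ->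
  exists L, Un_cv (rsum x) L.
Proof.
  intros x J Hx. destruct (R_complete (rsum x)) as [L HL]; [|exists L; auto].
  intros eps He. destruct (pow_lt_1_zero (/2) ltac:(rewrite Rabs_right; lra) (eps/2) ltac:(lra)) as [N0 HN0].
  exists (max J N0). intros n m Hn Hm.
  assert (key : forall a b, (max J N0 <= a)%nat -> (a <= b)%nat -> Rdist (rsum x b) (rsum x a) < eps).
  { intros a b Ha Hab. replace b with (a + (b - a))%nat by lia. rewrite rsum_shift. unfold Rdist.
    replace (rsum x a + rsum (fun j => x (a + j)%nat) (b - a) - rsum x a)
      with (rsum (fun j => x (a + j)%nat) (b - a)) by ring.
    eapply Rle_lt_trans; [apply rsum_abs|].
    eapply Rle_lt_trans; [apply (rsum_le _ (fun j => (/2)^(a+j)))|].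
    { intros; apply Hx; lia. }
    eapply Rle_lt_trans; [apply geom_le|].
    specialize (HN0 a ltac:(lia)). rewrite Rabs_right in HN0. lra.
    apply Rle_ge, pow_le; lra. }
  destruct (le_lt_dec m n).
  - apply key; lia.
  - rewrite Rdist_sym. apply key; lia.
Qed.

Lemma rsum_bound : forall a J, (forall j, 0 <= a j) -> (forall j, (J <= j)%nat -> a j <= (/2)^j) ->
  forall n, rsum a n <= rsum a J + 2.
Proof.
  intros a J Hp Hb n. destruct (le_lt_dec n J).
  - pose proof (rsum_mono a n J Hp l). lra.
  - replace n with (J + (n - J))%nat by lia. rewrite rsum_shift.
    assert (rsum (fun j => a (J + j)%nat) (n - J) <= rsum (fun j => (/2)^(J+j)) (n - J)).
    { apply rsum_le; intros; apply Hb; lia. }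
    pose proof (geom_le J (n - J)). assert ((/2)^J <= 1) by (rewrite <- (pow1 J); apply pow_incr; lra). lra.
Qed.

Definition Ccv (u : nat -> Cplx) (L : Cplx) :=
  Un_cv (fun n => Re (u n)) (Re L) /\ Un_cv (fun n => Im (u n)) (Im L).
Definition Rlim (v : nat -> R) : R := epsilon (inhabits 0) (fun l => Un_cv v l).
Definition Climit (u : nat -> Cplx) : Cplx :=
  mkC (Rlim (fun n => Re (u n))) (Rlim (fun n => Im (u n))).

Lemma Rlim_spec : forall v l, Un_cv v l -> Rlim v = l.
Proof.
  intros v l H. unfold Rlim. apply (UL_sequence v); auto.
  apply epsilon_spec. exists l; auto.
Qed.

Lemma Climit_spec : forall u L, Ccv u L -> Climit u = L.
Proof. intros u L [H1 H2]. unfold Climit. rewrite (Rlim_spec _ _ H1), (Rlim_spec _ _ H2). destruct L; auto. Qed.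

Lemma Un_cv_const : forall c, Un_cv (fun _ => c) c.
Proof. intros c eps He. exists 0%nat. intros. unfold Rdist. rewrite Rminus_diag, Rabs_R0; lra. Qed.

Lemma Un_cv_ext : forall u v l, (forall n, u n = v n) -> Un_cv u l -> Un_cv v l.
Proof. intros u v l E H eps He. destruct (H eps He) as [N HN]. exists N. intros. rewrite <- E; auto. Qed.

Lemma Ccv_sub : forall u v a b, Ccv u a -> Ccv v b -> Ccv (fun n => Csub (u n) (v n)) (Csub a b).
Proof.
  intros u v a b [H1 H2] [H3 H4]. split; simpl.
  - apply (Un_cv_ext (fun n => Re (u n) - Re (v n))); [intros; simpl; ring|]. now apply CV_minus.
  - apply (Un_cv_ext (fun n => Im (u n) - Im (v n))); [intros; simpl; ring|]. now apply CV_minus.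
Qed.

Lemma Ccv_mulc : forall u a h, Ccv u a -> Ccv (fun n => Cmul (u n) h) (Cmul a h).
Proof.
  intros u a h [H1 H2]. split; simpl.
  - apply (Un_cv_ext (fun n => Re (u n) * Re h - Im (u n) * Im h)); [intros; simpl; ring|].
    apply CV_minus; apply CV_mult; auto; apply Un_cv_const.
  - apply (Un_cv_ext (fun n => Re (u n) * Im h + Im (u n) * Re h)); [intros; simpl; ring|].
    apply CV_plus; apply CV_mult; auto; apply Un_cv_const.
Qed.

Lemma Ccv_eventually : forall u c m, (forall n, (m <= n)%nat -> u n = c) -> Ccv u c.
Proof.
  intros u c m H. split; intros eps He; exists m; intros n Hn; rewrite H by lia;
  unfold Rdist; rewrite Rminus_diag, Rabs_R0; lra.
Qed.

Lemma Ccv_norm_le : forall u L B, Ccv u L -> (forall n, Cnorm (u n) <= B) -> Cnorm L <= B.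
Proof.
  intros u L B [H1 H2] Hb. apply Rnot_lt_le. intro Hlt.
  set (eps := (Cnorm L - B) / 2).
  destruct (H1 eps ltac:(unfold eps; lra)) as [N1 P1].
  destruct (H2 eps ltac:(unfold eps; lra)) as [N2 P2].
  specialize (P1 (max N1 N2) ltac:(lia)). specialize (P2 (max N1 N2) ltac:(lia)).
  set (w := u (max N1 N2)) in *. unfold Rdist in *.
  pose proof (Cnorm_le_sum (Csub L w)). simpl in H.
  replace (Re L + - Re w) with (- (Re w - Re L)) in H by ring.
  replace (Im L + - Im w) with (- (Im w - Im L)) in H by ring.
  rewrite !Rabs_Ropp in H.
  pose proof (Cnorm_triangle w (Csub L w)).
  replace (Cadd w (Csub L w)) with L in H0 by Csolve.
  specialize (Hb (max N1 N2)). fold w in Hb. unfold eps in *. lra.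
Qed.

Lemma csum_cv : forall g J, (forall j, (J <= j)%nat -> Cnorm (g j) <= (/2)^j) ->
  exists L, Ccv (csum g) L.
Proof.
  intros g J H.
  destruct (rsum_cv (fun j => Re (g j)) J) as [L1 HL1].
  { intros; eapply Rle_trans; [apply Cnorm_Re|]; auto. }
  destruct (rsum_cv (fun j => Im (g j)) J) as [L2 HL2].
  { intros; eapply Rle_trans; [apply Cnorm_Im|]; auto. }
  exists (mkC L1 L2). split; simpl.
  - apply (Un_cv_ext (rsum (fun j => Re (g j)))); auto. intros; rewrite Re_csum; auto.
  - apply (Un_cv_ext (rsum (fun j => Im (g j)))); auto. intros; rewrite Im_csum; auto.
Qed.

Definition next (p : nat * nat) : nat * nat :=
  match p with (s, O) => (O, S s) | (s, S n) => (S s, n) end.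
Fixpoint enum (k : nat) : nat * nat :=
  match k with O => (O, O) | S k => next (enum k) end.

Lemma phi_enum : forall k, ((fst (enum k) + snd (enum k)) * (fst (enum k) + snd (enum k) + 1)
   + 2 * fst (enum k) = 2 * k)%nat.
Proof.
  induction k; simpl; auto.
  destruct (enum k) as [s n]; destruct n; simpl in *; nia.
Qed.

Lemma enum_surj_aux : forall d s, (s <= d)%nat -> exists k, enum k = (s, d - s)%nat.
Proof.
  induction d; intros s Hs.
  - exists 0%nat. replace s with 0%nat by lia. reflexivity.
  - induction s.
    + destruct (IHd d ltac:(lia)) as [k Hk]. exists (S k). simpl. rewrite Hk.
      replace (d - d)%nat with 0%nat by lia. reflexivity.
    + destruct (IHs ltac:(lia)) as [k Hk]. exists (S k). simpl. rewrite Hk.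
      replace (S d - s)%nat with (S (S d - S s)) by lia. reflexivity.
Qed.

Lemma enum_surj : forall s n, exists k, enum k = (s, n).
Proof.
  intros s n. destruct (enum_surj_aux (s + n) s ltac:(lia)) as [k Hk]. exists k.
  rewrite Hk. f_equal; lia.
Qed.

Lemma enum_order : forall j k, (j < k)%nat -> snd (enum j) = snd (enum k) ->
  (fst (enum j) < fst (enum k))%nat.
Proof.
  intros j k Hjk Hn. pose proof (phi_enum j). pose proof (phi_enum k).
  destruct (enum j) as [a n]; destruct (enum k) as [b m]; simpl in *. subst m.
  destruct (le_lt_dec b a); auto.
  assert ((b + n) * (b + n + 1) <= (a + n) * (a + n + 1))%nat by (apply Nat.mul_le_mono; lia).
  lia.
Qed.

Lemma least_exists : forall (P : nat -> Prop) n, P n -> exists m, P m /\ forall m', (m' < m)%nat -> ~ P m'.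
Proof.
  intros P n. induction n as [n IH] using (well_founded_induction lt_wf). intros Hn.
  destruct (classic (exists m', (m' < n)%nat /\ P m')) as [[m' [H1 H2]]|H].
  - apply (IH m' H1 H2).
  - exists n; split; auto. intros m' Hm' Pm'. apply H; eauto.
Qed.

Definition sk (k : nat) := fst (enum k).
Definition nk (k : nat) := snd (enum k).
Definition ep (e : nat -> Cplx) (n : nat) : Cplx := match n with O => C0 | S n => e n end.
Definition pk (e : nat -> Cplx) (k : nat) := ep e (nk k).
Definition red (e : nat -> Cplx) (k : nat) := exists n', (n' < nk k)%nat /\ ep e n' = ep e (nk k).

Fixpoint Rq (e : nat -> Cplx) (k j : nat) : list Cplx :=
  match j with
  | O => [C1]
  | S j' => if excluded_middle_informative (pk e j' = pk e k) then Rq e k j'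
            else linpow (pk e j') (S (sk j')) (Rq e k j')
  end.
Definition Q (e : nat -> Cplx) (k : nat) := linpow (pk e k) (sk k) (Rq e k k).
Definition qk (e : nat -> Cplx) (k : nat) := eval (dern (sk k) (Q e k)) (pk e k).
Definition Bk (e : nat -> Cplx) (k : nat) := rsum (fun i => absp (dern i (Q e k)) (INR k)) (S k).
Definition rho (e : nat -> Cplx) (k : nat) := (/2)^k / (1 + Bk e k).
Definition Tp (T : Cplx -> Prop) (t : Cplx) := T t /\ t <> C0.
Definition Vk (e : nat -> Cplx) (g : nat -> Cplx) (k : nat) :=
  csum (fun j => Cmul (g j) (eval (dern (sk k) (Q e j)) (pk e k))) k.
Definition choose (e : nat -> Cplx) (T : Cplx -> Prop) (g : nat -> Cplx) (k : nat) : Cplx :=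
  if excluded_middle_informative (red e k) then C0 else
  Cmul (Csub (epsilon (inhabits C0)
     (fun t => Tp T t /\ Cnorm (Csub t (Vk e g k)) < Cnorm (qk e k) * rho e k)) (Vk e g k))
     (Cinv (qk e k)).
Fixpoint Fs (e : nat -> Cplx) (T : Cplx -> Prop) (k : nat) : nat -> Cplx :=
  match k with
  | O => fun _ => C0
  | S k => fun j => if Nat.ltb j k then Fs e T k j else choose e T (Fs e T k) k
  end.
Definition cc e T j := Fs e T (S j) j.

Lemma Fs_cc : forall e T k j, (j < k)%nat -> Fs e T k j = cc e T j.
Proof.
  induction k; intros j Hj; [lia|]. simpl.
  destruct (Nat.ltb_spec j k). apply IHk; auto.
  assert (j = k) by lia. subst. unfold cc. simpl. rewrite Nat.ltb_irrefl. reflexivity.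
Qed.

Lemma cc_choose : forall e T k, cc e T k = choose e T (cc e T) k.
Proof.
  intros. unfold cc at 1. simpl. rewrite Nat.ltb_irrefl. unfold choose.
  replace (Vk e (Fs e T k) k) with (Vk e (cc e T) k). reflexivity.
  unfold Vk. apply csum_ext. intros; rewrite Fs_cc; auto.
Qed.

Lemma Rq_nonzero : forall e k j, eval (Rq e k j) (pk e k) <> C0.
Proof.
  induction j; simpl.
  - intro H. assert (Re (Cadd C1 (Cmul (pk e k) C0)) = Re C0) by (rewrite H; auto).
    unfold Cadd, Cmul, C1, C0 in H0; simpl in H0. lra.
  - destruct (excluded_middle_informative (pk e j = pk e k)); auto.
    exact (eval_linpow_nonzero (pk e j) (S (sk j)) _ _ (not_eq_sym n) IHj).
Qed.

Lemma qk_nonzero : forall e k, qk e k <> C0.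
Proof.
  intros. unfold qk, Q. rewrite nonvan. apply Cmul_nonzero.
  - apply INRc_nonzero. apply lt_O_fact.
  - apply Rq_nonzero.
Qed.

Lemma Rq_vanish : forall e k j i, (i < j)%nat -> pk e i <> pk e k ->
  vanish (Rq e k j) (pk e i) (S (sk i)).
Proof.
  induction j; intros i Hi Hne; [lia|]. cbn [Rq].
  destruct (excluded_middle_informative (pk e j = pk e k)) as [E|E].
  - destruct (Nat.eq_dec i j). subst; contradiction. apply IHj; auto; lia.
  - destruct (Nat.eq_dec i j).
    + subst. apply vanish_linpow_same.
    + apply vanish_linpow. apply IHj; auto; lia.
Qed.

Lemma Q_vanish_other : forall e i j, (i < j)%nat -> pk e i <> pk e j ->
  vanish (Q e j) (pk e i) (S (sk i)).
Proof. intros. unfold Q. apply vanish_linpow. apply Rq_vanish; auto. Qed.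

Lemma Q_vanish_self : forall e j, vanish (Q e j) (pk e j) (sk j).
Proof. intros. unfold Q. apply vanish_linpow_same. Qed.

Lemma cc_red : forall e T k, red e k -> cc e T k = C0.
Proof.
  intros. rewrite cc_choose. unfold choose. destruct (excluded_middle_informative (red e k)); auto.
  contradiction.
Qed.

Lemma dense_Tp : forall T, dense_set T -> forall z eps, 0 < eps ->
  exists t, Tp T t /\ Cnorm (Csub t z) < eps.
Proof.
  intros T HT z eps He.
  destruct (classic (z = C0)) as [Hz|Hz].
  - destruct (HT (mkC (eps/2) 0) (eps/2) ltac:(lra)) as [t [Tt Ht]].
    exists t. split. split; auto.
    + intro Ht0. subst t. replace (Csub C0 (mkC (eps/2) 0)) with (mkC (-(eps/2)) 0) in Ht by Csolve.
      rewrite Cnorm_real in Ht. rewrite Rabs_left in Ht; lra.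
    + subst z. replace (Csub t C0) with (Cadd (Csub t (mkC (eps/2) 0)) (mkC (eps/2) 0)) by Csolve.
      eapply Rle_lt_trans; [apply Cnorm_triangle|]. rewrite Cnorm_real, Rabs_right; lra.
  - pose proof (Cnorm_pos z Hz).
    destruct (HT z (Rmin eps (Cnorm z)) ltac:(apply Rmin_pos; lra)) as [t [Tt Ht]].
    pose proof (Rmin_l eps (Cnorm z)). pose proof (Rmin_r eps (Cnorm z)).
    exists t. split. split; auto.
    + intro Ht0. subst t. replace (Csub C0 z) with (Copp z) in Ht by Csolve. rewrite Cnorm_opp in Ht. lra.
    + lra.
Qed.

Lemma cc_spec : forall e T, dense_set T -> forall k, ~ red e k ->
  exists t, Tp T t /\ Cadd (Vk e (cc e T) k) (Cmul (cc e T k) (qk e k)) = t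
     /\ Cnorm (cc e T k) < rho e k.
Proof.
  intros e T HT k Hk.
  assert (Hrho : 0 < rho e k).
  { unfold rho, Bk. apply Rdiv_lt_0_compat. apply pow_lt; lra.
    pose proof (rsum_nonneg (fun i => absp (dern i (Q e k)) (INR k)) (S k)
      ltac:(intros; apply absp_nonneg, pos_INR)). lra. }
  pose proof (Cnorm_pos _ (qk_nonzero e k)) as Hq.
  set (V := Vk e (cc e T) k).
  set (P := fun t => Tp T t /\ Cnorm (Csub t V) < Cnorm (qk e k) * rho e k).
  assert (HP : P (epsilon (inhabits C0) P)).
  { apply epsilon_spec. apply dense_Tp; auto. apply Rmult_lt_0_compat; auto. }
  set (t := epsilon (inhabits C0) P) in *.
  assert (Hc : cc e T k = Cmul (Csub t V) (Cinv (qk e k))).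
  { rewrite cc_choose. unfold choose. destruct (excluded_middle_informative (red e k)); [contradiction|].
    reflexivity. }
  assert (Hcq : Cmul (cc e T k) (qk e k) = Csub t V).
  { rewrite Hc. pose proof (Cinv_l _ (qk_nonzero e k)).
    replace (Cmul (Cmul (Csub t V) (Cinv (qk e k))) (qk e k))
      with (Cmul (Csub t V) (Cmul (Cinv (qk e k)) (qk e k))) by Csolve.
    rewrite H. Csolve. }
  exists t. destruct HP as [HTp Hlt]. split; auto. split.
  - rewrite Hcq. Csolve.
  - assert (Cnorm (cc e T k) * Cnorm (qk e k) < rho e k * Cnorm (qk e k)).
    { rewrite <- Cnorm_mul, Hcq. lra. }
    nra.
Qed.

Lemma cc_bound : forall e T, dense_set T -> forall k, Cnorm (cc e T k) <= rho e k.
Proof.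
  intros. destruct (classic (red e k)).
  - rewrite cc_red by auto. rewrite Cnorm_C0. unfold rho, Bk. apply Rlt_le, Rdiv_lt_0_compat.
    apply pow_lt; lra.
    pose proof (rsum_nonneg (fun i => absp (dern i (Q e k)) (INR k)) (S k)
      ltac:(intros; apply absp_nonneg, pos_INR)). lra.
  - destruct (cc_spec e T H k H0) as [t [_ [_ Hl]]]. lra.
Qed.

Lemma rsum_term : forall f n i, (forall j, 0 <= f j) -> (i < n)%nat -> f i <= rsum f n.
Proof.
  induction n; intros; [lia|]. simpl. destruct (Nat.eq_dec i n).
  - subst. pose proof (rsum_nonneg f n H). lra.
  - pose proof (IHn i H ltac:(lia)). pose proof (H n). lra.
Qed.

Lemma term_bound : forall e T, dense_set T -> forall s j x, (s <= j)%nat -> 0 <= x -> x <= INR j ->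
  Cnorm (cc e T j) * absp (dern s (Q e j)) x <= (/2)^j.
Proof.
  intros e T HT s j x Hs Hx Hxj.
  pose proof (cc_bound e T HT j). pose proof (Cnorm_nonneg (cc e T j)).
  assert (A1 : absp (dern s (Q e j)) x <= Bk e j).
  { eapply Rle_trans. apply (absp_mono _ x (INR j)); auto.
    unfold Bk. apply (rsum_term (fun i => absp (dern i (Q e j)) (INR j))); [|lia].
    intros; apply absp_nonneg, pos_INR. }
  assert (A0 : 0 <= absp (dern s (Q e j)) x) by (apply absp_nonneg; auto).
  assert (HB : 0 <= Bk e j) by lra.
  unfold rho in H.
  assert (Hp : 0 < (/2)^j) by (apply pow_lt; lra).
  assert (Cnorm (cc e T j) * (1 + Bk e j) <= (/2)^j).
  { apply (Rmult_le_compat_r (1 + Bk e j)) in H; [|lra]. unfold Rdiv in H.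
    rewrite Rmult_assoc, Rinv_l in H; lra. }
  nra.
Qed.

Definition psum e T s z (n : nat) := csum (fun j => Cmul (cc e T j) (eval (dern s (Q e j)) z)) n.
Definition Dt e T (s : nat) (z : Cplx) := Climit (psum e T s z).

Lemma nat_above : forall x, exists N : nat, x <= INR N.
Proof.
  intros x. destruct (INR_archimed 1 x ltac:(lra)) as [n Hn]. exists n. lra.
Qed.

Lemma Dconv : forall e T, dense_set T -> forall s w, Ccv (psum e T s w) (Dt e T s w).
Proof.
  intros e T HT s w. destruct (nat_above (Cnorm w)) as [N HN].
  destruct (csum_cv (fun j => Cmul (cc e T j) (eval (dern s (Q e j)) w)) (max s N)) as [L HL].
  { intros j Hj. rewrite Cnorm_mul.
    eapply Rle_trans; [|apply (term_bound e T HT s j (Cnorm w)); try lia; auto using Cnorm_nonneg].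
    apply Rmult_le_compat_l; [apply Cnorm_nonneg|]. apply eval_bound.
    eapply Rle_trans; [apply HN|]. apply le_INR; lia. }
  unfold Dt. rewrite (Climit_spec _ L); auto.
Qed.

Lemma Ccv_ext : forall u v L, (forall n, u n = v n) -> Ccv u L -> Ccv v L.
Proof.
  intros u v L E [H1 H2]. split; eapply Un_cv_ext; eauto; intros; simpl; rewrite E; auto.
Qed.

Lemma csum_comb : forall f g k h n,
  Csub (Csub (csum f n) (csum g n)) (Cmul (csum k n) h) =
  csum (fun j => Csub (Csub (f j) (g j)) (Cmul (k j) h)) n.
Proof. induction n; simpl. Csolve. rewrite <- IHn. Csolve. Qed.

Lemma rsum_scal : forall c f n, rsum (fun j => c * f j) n = c * rsum f n.
Proof. induction n; simpl. ring. rewrite IHn. ring. Qed.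

Lemma Dt_deriv : forall e T, dense_set T -> forall s z,
  C_has_derivative (Dt e T s) z (Dt e T (S s) z).
Proof.
  intros e T HT s z.
  destruct (nat_above (Cnorm z + 1)) as [N HN].
  set (J := max s N).
  set (a := fun j => Cnorm (cc e T j) * absp (dern s (Q e j)) (Cnorm z + 1)).
  assert (Ha : forall j, 0 <= a j).
  { intros; unfold a. apply Rmult_le_pos. apply Cnorm_nonneg. apply absp_nonneg.
    pose proof (Cnorm_nonneg z); lra. }
  assert (Hab : forall n, rsum a n <= rsum a J + 2).
  { apply rsum_bound; auto. intros j Hj. unfold a. apply term_bound; auto. lia.
    pose proof (Cnorm_nonneg z); lra. eapply Rle_trans; [apply HN|]. apply le_INR; lia. }
  set (M := rsum a J + 2).
  assert (HM : 0 <= M) by (unfold M; pose proof (rsum_nonneg a J Ha); lra).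
  intros eps He. exists (Rmin 1 (eps / (M + 1))). split.
  { apply Rmin_pos; [lra|]. apply Rdiv_lt_0_compat; lra. }
  intros h Hh. pose proof (Rmin_l 1 (eps/(M+1))). pose proof (Rmin_r 1 (eps/(M+1))).
  pose proof (Cnorm_nonneg h) as Hh0.
  set (X := Csub (Csub (Dt e T s (Cadd z h)) (Dt e T s z)) (Cmul (Dt e T (S s) z) h)).
  assert (HX : Ccv (fun n => csum (fun j => Cmul (cc e T j) (Erem (dern s (Q e j)) z h)) n) X).
  { unfold X. eapply Ccv_ext; [|apply Ccv_sub; [apply Ccv_sub|apply Ccv_mulc]; apply Dconv; auto].
    intros n. simpl. unfold psum. rewrite csum_comb. apply csum_ext. intros j _.
    unfold Erem. simpl dern. Csolve. }
  assert (Hb : Cnorm X <= Cnorm h * Cnorm h * M).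
  { apply (Ccv_norm_le _ _ _ HX). intros n.
    eapply Rle_trans; [apply csum_norm|].
    eapply Rle_trans; [apply (rsum_le _ (fun j => (Cnorm h * Cnorm h) * a j))|].
    { intros j _. rewrite Cnorm_mul. unfold a.
      pose proof (B2 (dern s (Q e j)) z h ltac:(lra)). pose proof (Cnorm_nonneg (cc e T j)).
      replace (Cnorm h * Cnorm h * (Cnorm (cc e T j) * absp (dern s (Q e j)) (Cnorm z + 1)))
        with (Cnorm (cc e T j) * (Cnorm h * Cnorm h * absp (dern s (Q e j)) (Cnorm z + 1))) by ring.
      apply Rmult_le_compat_l; auto. }
    rewrite rsum_scal. apply Rmult_le_compat_l. nra. apply Hab. }
  fold X.
  assert (Cnorm h * M <= eps).
  { assert (Cnorm h * (M+1) <= eps).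
    { assert (Cnorm h <= eps / (M+1)) by lra.
      apply (Rmult_le_compat_r (M+1)) in H1; [|lra].
      unfold Rdiv in H1. rewrite Rmult_assoc, Rinv_l in H1; lra. }
    nra. }
  nra.
Qed.

Lemma tail_zero : forall e T, dense_set T -> forall k j, ~ red e k -> (k < j)%nat ->
  Cmul (cc e T j) (eval (dern (sk k) (Q e j)) (pk e k)) = C0.
Proof.
  intros e T HT k j Hk Hkj.
  destruct (classic (red e j)) as [Hj|Hj].
  { rewrite cc_red by auto. Csolve. }
  destruct (classic (pk e k = pk e j)) as [E|E].
  - assert (Hn : nk k = nk j).
    { destruct (lt_eq_lt_dec (nk k) (nk j)) as [[l|l]|l]; auto.
      - exfalso; apply Hj. exists (nk k); split; auto.
      - exfalso; apply Hk. exists (nk j); split; auto. }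
    pose proof (enum_order k j Hkj Hn).
    rewrite E. rewrite (Q_vanish_self e j (sk k)). Csolve. apply H.
  - rewrite (Q_vanish_other e k j Hkj E (sk k)). Csolve. lia.
Qed.

Lemma Dt_cond : forall e T, dense_set T -> forall k, ~ red e k -> Tp T (Dt e T (sk k) (pk e k)).
Proof.
  intros e T HT k Hk.
  destruct (cc_spec e T HT k Hk) as [t [Ht [Hsum _]]].
  unfold Dt. rewrite (Climit_spec _ t); auto.
  apply (Ccv_eventually _ _ (S k)). intros n Hn. unfold psum.
  rewrite (csum_tail_zero _ (S k) n).
  - simpl. rewrite <- Hsum. unfold Vk. reflexivity.
  - intros j Hj. apply tail_zero; auto.
  - exact Hn.
Qed.

Lemma Dt_all : forall e T, dense_set T -> forall s n, Tp T (Dt e T s (ep e n)).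
Proof.
  intros e T HT s n.
  destruct (least_exists (fun m => ep e m = ep e n) n eq_refl) as [m [Hm Hmin]].
  destruct (enum_surj s m) as [k Hk].
  assert (Hs : sk k = s) by (unfold sk; rewrite Hk; auto).
  assert (Hn : nk k = m) by (unfold nk; rewrite Hk; auto).
  assert (Hr : ~ red e k).
  { intros [n' [H1 H2]]. rewrite Hn in *. apply (Hmin n'); auto. congruence. }
  pose proof (Dt_cond e T HT k Hr). unfold pk in H. rewrite Hs, Hn, Hm in H. auto.
Qed.

Lemma nth_ladd : forall a b n, nth n (ladd a b) C0 = Cadd (nth n a C0) (nth n b C0).
Proof.
  induction a as [|x a IH]; intros [|y b] n; simpl; try (destruct n; simpl; Csolve).
  destruct n; simpl; auto.
Qed.

Lemma nth_deriv : forall l n, nth n (deriv l) C0 = Cmul (INRc (S n)) (nth (S n) l C0).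
Proof.
  induction l as [|x l IH]; intros n.
  - simpl. destruct n; simpl; Csolve.
  - simpl deriv. rewrite nth_ladd. destruct n.
    + simpl. unfold INRc; simpl. Csolve.
    + simpl nth at 2. rewrite IH. simpl nth. unfold INRc. rewrite (S_INR (S n)). Csolve.
Qed.

Definition zero_from (l : list Cplx) (m : nat) := forall i, (m <= i)%nat -> nth i l C0 = C0.

Lemma zero_from_deriv : forall l m, zero_from l (S m) -> zero_from (deriv l) m.
Proof. intros l m H i Hi. rewrite nth_deriv, H by lia. Csolve. Qed.

Lemma zero_dern : forall k l m, zero_from l (k + m) -> zero_from (dern k l) m.
Proof.
  induction k; intros l m H; simpl; auto.
  apply zero_from_deriv. apply IHk. replace (k + S m)%nat with (S k + m)%nat by lia. auto.
Qed.

Lemma eval_zero : forall l, zero_from l 0 -> forall z, eval l z = C0.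
Proof.
  induction l as [|x l IH]; intros H z; simpl; auto.
  rewrite IH. assert (Hx := H 0%nat ltac:(lia)); simpl in Hx; rewrite Hx. Csolve.
  simpl in H. intros i Hi. apply (H (S i)). lia.
Qed.

Lemma zero_length : forall l, zero_from l (length l).
Proof. intros l i Hi. apply nth_overflow. auto. Qed.

Lemma eval_app : forall l x z, eval (l ++ [x]) z = Cadd (eval l z) (Cmul x (Cpow z (length l))).
Proof.
  induction l as [|b l IH]; intros; simpl.
  - Csolve.
  - rewrite IH. Csolve.
Qed.

Lemma eval_L : forall a N z, eval (map a (seq 0 (S N))) z = Csum (fun k => Cmul (a k) (Cpow z k)) N.
Proof.
  induction N; intros.
  - simpl. Csolve.
  - rewrite (seq_S (S N)), map_app. simpl (map a [_]). rewrite eval_app, IHN. simpl Csum. rewrite length_map, length_seq.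
    reflexivity.
Qed.

Lemma poly_tower : forall f D L, derivative_tower f D -> (forall z, f z = eval L z) ->
  forall s z, D s z = eval (dern s L) z.
Proof.
  intros f D L [H0 Hd] Hf. induction s; intros z.
  - rewrite H0; auto.
  - apply (deriv_unique (D s) z). apply Hd.
    apply (has_deriv_ext (eval (dern s L))). intros w; rewrite IHs; auto.
    apply eval_has_deriv.
Qed.

Theorem corollary1 :
  forall (Sigma T : Cplx -> Prop),
    countable_set Sigma -> dense_set T ->
    exists (f : Cplx -> Cplx) (D : nat -> Cplx -> Cplx),
      transcendental_entire f /\ derivative_tower f D /\
      forall (s : nat) (z : Cplx), Sigma z -> T (D s z).
Proof.
  intros Sigma T [e He] HT.
  exists (Dt e T 0), (Dt e T).
  assert (Htower : derivative_tower (Dt e T 0) (Dt e T)).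
  { split; [reflexivity|]. intros; apply Dt_deriv; auto. }
  split; [|split; auto].
  - split.
    + intro z; exists (Dt e T 1 z); apply Dt_deriv; auto.
    + intros [N [a Ha]].
      assert (HD : forall s z, Dt e T s z = eval (dern s (map a (seq 0 (S N)))) z).
      { apply (poly_tower _ _ _ Htower). intros; rewrite Ha; symmetry; apply eval_L. }
      destruct (Dt_all e T HT (S N) 0) as [_ Hne]. simpl ep in Hne.
      apply Hne. rewrite HD. apply eval_zero. apply zero_dern. rewrite Nat.add_0_r.
      pose proof (zero_length (map a (seq 0 (S N)))). rewrite length_map, length_seq in H. auto.
  - intros s z Hz. destruct (He z Hz) as [n Hn].
    destruct (Dt_all e T HT s (S n)) as [HTt _]. simpl ep in HTt. rewrite Hn in HTt. auto.
Qed.
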